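(* Let $A,B\subseteq\Sigma^+$ be such that either (1) there are $a\in A$ and $b_1,b_2\in B$ with $b_1\sqsubseteq a$ and $a\sqsubseteq b_2$, or (2) there are $a_1,a_2\in A$ and $b\in B$ with $a_1\sqsubseteq b$ and $b\sqsubseteq a_2$. Then in every deduction tree of $\langle A,B\rangle$, the rule applied at the root is neither Future nor Globally.
   Context: Let $AP$ be a finite set of atomic propositions and $\Sigma=2^{AP}$. For $\sigma=w_0\cdots w_m\in\Sigma^+$ and $j\le m$, $\sigma^{(j)}=w_j\cdots w_m$; $\sigma_1\sqsubseteq\sigma_2$ means $\sigma_1=\sigma_2^{(j)}$ for some position $j$ of $\sigma_2$ (i.e. $\sigma_1$ is a suffix of $\sigma_2$). For $A\subseteq\Sigma^+$: $A^{\mathsf X}=\{\sigma^{(1)}:\sigma\in A,|\sigma|\ge2\}$; $A^{\mathsf G}=\{\sigma^{(j)}:\sigma\in A,0\le j<|\sigma|\}$; a future point for $A$ is $f:A\to\mathbb N$ with $f(\sigma)<|\sigma|$, and $A^f=\{\sigma^{(f(\sigma))}:\sigma\in A\}$. For a literal $\alpha\in\{p,\neg p:p\in AP\}$, $A\models\alpha$ means $\alpha$ holds at position $0$ of every trace in $A$; $B\perp\alpha$ means it fails at position $0$ of every trace in $B$. Proof system on terms $\langle A,B\rangle$: Atomic: $\langle A,B\rangle$ if $A\models\alpha$, $B\perp\alpha$ for a literal $\alpha$; Or: $\langle A_1\uplus A_2,B\rangle$ from $\langle A_1,B\rangle,\langle A_2,B\rangle$; And: $\langle A,B_1\uplus B_2\rangle$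 from $\langle A,B_1\rangle,\langle A,B_2\rangle$; Next: $\langle A,B\rangle$ from $\langle A^{\mathsf X},B^{\mathsf X}\rangle$ if $|A^{\mathsf X}|=|A|$; WeakNext: $\langle A,B\rangle$ from $\langle A^{\mathsf X},B^{\mathsf X}\rangle$ if $|B^{\mathsf X}|=|B|$; Future: $\langle A,B\rangle$ from $\langle A^f,B^{\mathsf G}\rangle$, $f$ a future point for $A$; Globally: $\langle A,B\rangle$ from $\langle A^{\mathsf G},B^f\rangle$, $f$ a future point for $B$ ($\uplus$ = disjoint union). A deduction tree for $\langle A,B\rangle$ is a finite tree of rule applications rooted at $\langle A,B\rangle$ with all hypotheses derived. *)

(* Defs.v *)
From mathcomp Require Import all_boot.
From mathcomp Require Import finmap.
Set Implicit Arguments. Unset Strict Implicit. Unset Printing Implicit Defensive.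
Open Scope fset_scope.

Section LTL.
Variable AP : finType.

(* a letter of Sigma = 2^AP; a trace is a (nonempty, by hypothesis) word *)
Definition letter := {set AP}.
Definition trace := seq letter.

Definition suf (j : nat) (s : trace) : trace := drop j s.

Definition suffixeq (s1 s2 : trace) : Prop :=
  exists2 j, j < size s2 & s1 = suf j s2.

Definition nonempty_traces (A : {fset trace}) : Prop :=
  forall s, s \in A -> 0 < size s.

Definition setX (A : {fset trace}) : {fset trace} :=
  [fset suf 1 s | s in A & 1 < size s].

Definition setG (A : {fset trace}) : {fset trace} :=
  [fset t in flatten [seq [seq suf j s | j <- iota 0 (size s)] | s <- A]].

Definition future_point (A : {fset trace}) (f : trace -> nat) : Prop :=
  forall s, s \in A -> f s < size s.

Definition setF (A : {fset trace}) (f : trace -> nat) : {fset trace} :=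
  [fset suf (f s) s | s in A].

(* literal: p (if b = true) or ~p (if b = false) *)
Record literal := Lit { lit_var : AP; lit_pos : bool }.

Definition holds0 (a : literal) (s : trace) : bool :=
  if s is w :: _ then (lit_var a \in w) == lit_pos a else false.

Definition models (A : {fset trace}) (a : literal) : Prop :=
  forall s, s \in A -> holds0 a s.
Definition perp (B : {fset trace}) (a : literal) : Prop :=
  forall s, s \in B -> ~~ holds0 a s.

Inductive deriv : {fset trace} -> {fset trace} -> Type :=
| DAtomic A B (a : literal) : models A a -> perp B a -> deriv A B
| DOr A B A1 A2 : A = A1 `|` A2 -> [disjoint A1 & A2] ->
    deriv A1 B -> deriv A2 B -> deriv A B
| DAnd A B B1 B2 : B = B1 `|` B2 -> [disjoint B1 & B2] ->
    deriv A B1 -> deriv A B2 -> deriv A B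
| DNext A B : #|` setX A| = #|` A| -> deriv (setX A) (setX B) -> deriv A B
| DWeakNext A B : #|` setX B| = #|` B| -> deriv (setX A) (setX B) -> deriv A B
| DFuture A B (f : trace -> nat) : future_point A f ->
    deriv (setF A f) (setG B) -> deriv A B
| DGlobally A B (f : trace -> nat) : future_point B f ->
    deriv (setG A) (setF B f) -> deriv A B.

Inductive rule := RAtomic | ROr | RAnd | RNext | RWeakNext | RFuture | RGlobally.

Definition root_rule A B (d : deriv A B) : rule :=
  match d with
  | DAtomic _ _ _ _ _ => RAtomic
  | DOr _ _ _ _ _ _ _ _ => ROr
  | DAnd _ _ _ _ _ _ _ _ => RAnd
  | DNext _ _ _ _ => RNext
  | DWeakNext _ _ _ _ => RWeakNext
  | DFuture _ _ _ _ _ => RFuture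
  | DGlobally _ _ _ _ _ => RGlobally
  end.
End LTL.

(* Main.v *)
Require Import Defs.
From mathcomp Require Import all_boot.
From mathcomp Require Import finmap.
From mathcomp Require Import zify.
Open Scope fset_scope.
Lemma setX_card (AP : finType) (A : {fset trace AP}) s :
  s \in A -> size s <= 1 -> #|` Defs.setX A| < #|` A|.
Proof.
move=> sA hs.
have sub : Defs.setX A `<=` suf 1 @` (A `\ s).
  apply/fsubsetP => x /imfsetP [y /= /andP [yA hy] ->].
  apply/imfsetP; exists y => //=.
  rewrite in_fsetD1 yA andbT; apply/eqP => e; subst; by rewrite ltnNge hs in hy.
apply: (leq_ltn_trans (fsubset_leq_card sub)).
apply: (leq_ltn_trans (leq_imfset_card _ _ _)).
by rewrite [X in _ < X](cardfsD1 s) sA.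
Qed.

Lemma deriv_disj (AP : finType) (A B : {fset trace AP}) (d : deriv A B) :
  forall s, s \in A -> s \in B -> False.
Proof.
elim: d => {A B}.
- move=> A B a hA hB s sA sB. by move: (hB s sB); rewrite hA.
- move=> A B A1 A2 -> _ _ IH1 _ IH2 s; rewrite in_fsetU => /orP [] h sB.
  exact: (IH1 s). exact: (IH2 s).
- move=> A B B1 B2 -> _ _ IH1 _ IH2 s sA; rewrite in_fsetU => /orP [] h.
  exact: (IH1 s). exact: (IH2 s).
- move=> A B hc _ IH s sA sB.
  case: (leqP (size s) 1) => hs.
    by move: (@setX_card _ _ _ sA hs); rewrite hc ltnn.
  apply: (IH (suf 1 s)); apply/imfsetP; exists s => //=; rewrite ?inE ?sA ?sB ?hs /=. all: try done.
- move=> A B hc _ IH s sA sB.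
  case: (leqP (size s) 1) => hs.
    by move: (@setX_card _ _ _ sB hs); rewrite hc ltnn.
  apply: (IH (suf 1 s)); apply/imfsetP; exists s => //=; rewrite ?inE ?sA ?sB ?hs /=. all: try done.
- move=> A B f hf _ IH s sA sB.
  apply: (IH (suf (f s) s)); first by apply/imfsetP; exists s.
  rewrite /setG in_fset; apply/flattenP.
  exists [seq suf j s | j <- iota 0 (size s)]; first by apply/mapP; exists s.
  apply/mapP; exists (f s) => //; rewrite mem_iota add0n; exact: hf.
- move=> A B f hf _ IH s sA sB.
  apply: (IH (suf (f s) s)); last by apply/imfsetP; exists s.
  rewrite /setG in_fset; apply/flattenP.
  exists [seq suf j s | j <- iota 0 (size s)]; first by apply/mapP; exists s.
  apply/mapP; exists (f s) => //; rewrite mem_iota add0n; exact: hf.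
Qed.

Lemma suffixeq_trans (AP : finType) (x y z : trace AP) :
  suffixeq x y -> suffixeq y z -> suffixeq x z.
Proof.
move=> [i hi ->] [j hj ey]; subst y; exists (i + j)%N.
  by move: hi; rewrite /suf size_drop; lia.
by rewrite /suf drop_drop addnC.
Qed.

Lemma inG (AP : finType) (B : {fset trace AP}) x b :
  b \in B -> suffixeq x b -> x \in setG B.
Proof.
move=> bB [j hj ->].
rewrite /setG in_fset; apply/flattenP.
exists [seq suf j0 b | j0 <- iota 0 (size b)]; first by apply/mapP; exists b.
apply/mapP; exists j => //; rewrite mem_iota add0n; exact: hj.
Qed.

Lemma inF (AP : finType) (A : {fset trace AP}) f a :
  a \in A -> suf (f a) a \in setF A f.
Proof. by move=> aA; apply/imfsetP; exists a. Qed.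

Lemma suf_self (AP : finType) (a : trace AP) (j : nat) : j < size a -> suffixeq (suf j a) a.
Proof. by move=> h; exists j. Qed.

Theorem lemma12 (AP : finType) (A B : {fset trace AP}) :
  nonempty_traces A -> nonempty_traces B ->
  ((exists a b1 b2, [/\ a \in A, b1 \in B, b2 \in B,
       suffixeq b1 a & suffixeq a b2]) \/
   (exists a1 a2 b, [/\ a1 \in A, a2 \in A, b \in B,
       suffixeq a1 b & suffixeq b a2])) ->
  forall d : deriv A B, root_rule d <> RFuture /\ root_rule d <> RGlobally.
Proof.
move=> _ _ H d; move: H.
case: A B / d => [A' B' a _ _ | A' B' A1 A2 _ _ _ _ | A' B' B1 B2 _ _ _ _
  | A' B' _ _ | A' B' _ _ | A' B' f hf d | A' B' f hf d] H /=; try by split.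
- split=> // _.
  have key : forall a b, a \in A' -> b \in B' -> suffixeq a b -> False.
    move=> a b aA bB hab.
    apply: (@deriv_disj _ _ _ d _ (@inF _ _ f _ aA)).
    apply: (@inG _ _ _ _ bB); apply: suffixeq_trans hab; exact: (@suf_self _ _ _ (hf a aA)).
  case: H => [[a [b1 [b2 [aA _ b2B _ h]]]] | [a1 [a2 [b [a1A _ bB h _]]]]].
    exact: (key a b2).
  exact: (key a1 b).
- split=> // _.
  have key : forall a b, a \in A' -> b \in B' -> suffixeq b a -> False.
    move=> a b aA bB hab.
    apply: (@deriv_disj _ _ _ d _ _ (@inF _ _ f _ bB)).
    apply: (@inG _ _ _ _ aA); apply: suffixeq_trans hab; exact: (@suf_self _ _ _ (hf b bB)).
  case: H => [[a [b1 [b2 [aA b1B _ h _]]]] | [a1 [a2 [b [_ a2A bB _ h]]]]].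
    exact: (key a b1).
  exact: (key a2 b).
Qed.
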